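(* Let $R$ be a commutative generalized p.q.-Baer $*$-ring. Then (1) $GC(x)=GC(x^* )$ for every $x\in R$; (2) for $x,y\in R$, if $(xR)^ny=0$ for some $n\in\mathbb N$, then $GC(x)GC(y)=0$.
   Context: A $*$-ring is a ring with an involution; a projection is $e$ with $e=e^*=e^2$; projections are ordered by $e\le f\iff e=ef$. $r_R(S)=\{a\in R: sa=0\ \forall s\in S\}$. $R$ is a generalized p.q.-Baer $*$-ring if for every $x\in R$ there are $n\in\mathbb N$ and a projection $e$ with $r_R((xR)^n)=eR$. For $x\in R$, $GC(x)$ (generalized central cover) is the smallest central projection $e$ such that $x^ne=x^n$ for some $n\in\mathbb N$; it exists for every element of a generalized p.q.-Baer $*$-ring. *)

(* Defs.v *)
From mathcomp Require Import all_boot all_order all_algebra.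
Set Implicit Arguments. Unset Strict Implicit. Unset Printing Implicit Defensive.
Import GRing.Theory.
Local Open Scope ring_scope.

Definition is_involution (R : comNzRingType) (star : R -> R) : Prop :=
  [/\ forall x y : R, star (x + y) = star x + star y,
      forall x y : R, star (x * y) = star y * star x &
      forall x : R, star (star x) = x].

Definition is_projection (R : comNzRingType) (star : R -> R) (e : R) : Prop :=
  e = star e /\ e = e * e.

Definition is_central_projection (R : comNzRingType) (star : R -> R) (e : R) : Prop :=
  is_projection star e /\ forall a : R, e * a = a * e.

Definition proj_le (R : comNzRingType) (e f : R) : Prop := e = e * f.

(* a \in r_R((xR)^n): every product (x r_1)(x r_2)...(x r_n) annihilates a. *)
Definition in_rann_xRn (R : comNzRingType) (x : R) (n : nat) (a : R) : Prop :=
  forall r : 'I_n -> R, (\prod_(i < n) (x * r i)) * a = 0.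

Definition gen_pq_baer (R : comNzRingType) (star : R -> R) : Prop :=
  forall x : R, exists n : nat, exists e : R,
    is_projection star e /\
    forall a : R, in_rann_xRn x n.+1 a <-> exists b : R, a = e * b.

Definition is_GC (R : comNzRingType) (star : R -> R) (x e : R) : Prop :=
  [/\ is_central_projection star e,
      (exists n : nat, x ^+ n.+1 * e = x ^+ n.+1) &
      forall f : R, is_central_projection star f ->
        (exists m : nat, x ^+ m.+1 * f = x ^+ m.+1) -> proj_le e f].

(* Main.v *)
Require Import Defs.
From mathcomp Require Import all_boot all_order all_algebra.
Import GRing.Theory.
Local Open Scope ring_scope.

Lemma star1 (R : comNzRingType) (star : R -> R) : is_involution star -> star 1 = 1.
Proof.
case=> _ HM HI.
have h : forall x, star 1 * x = x.
  by move=> x; rewrite -{1}(HI x) -HM mulr1 HI.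
by rewrite -{1}(mulr1 (star 1)) h.
Qed.

Lemma starN (R : comNzRingType) (star : R -> R) : is_involution star ->
  forall x, star (- x) = - star x.
Proof.
case=> HA _ _ x.
have s0 : star 0 = 0 by apply: (addrI (star 0)); rewrite -HA !addr0.
by apply: (addrI (star x)); rewrite -HA !subrr s0.
Qed.

Lemma starX (R : comNzRingType) (star : R -> R) : is_involution star ->
  forall x k, star (x ^+ k) = (star x) ^+ k.
Proof.
move=> H x; elim=> [|k IH]; first by rewrite !expr0 star1.
case: H => _ HM _.
by rewrite exprS HM IH exprSr.
Qed.

Lemma prod_const1 (R : comNzRingType) (z : R) k :
  \prod_(i < k) (z * 1) = z ^+ k.
Proof. by rewrite prodr_const card_ord mulr1. Qed.

Lemma prod_split (R : comNzRingType) (z : R) k (r : 'I_k -> R) :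
  \prod_(i < k) (z * r i) = z ^+ k * \prod_(i < k) r i.
Proof. by rewrite big_split /= prodr_const card_ord. Qed.

Arguments starN {R star}.
Arguments star1 {R star}.
Arguments starX {R star}.
Theorem mainTheorem6 (R : comNzRingType) (star : R -> R)
  (Hinv : is_involution star) (Hbaer : gen_pq_baer star) :
  (forall x e f : R, is_GC star x e -> is_GC star (star x) f -> e = f) /\
  (forall x y e f : R, (exists n : nat, in_rann_xRn x n.+1 y) ->
     is_GC star x e -> is_GC star y f -> e * f = 0).
Proof.
have Hinv' := Hinv; case: Hinv' => HA HM HI.
split.
  move=> x e f [Ce [n Hn] Me] [Cf [m Hm] Mf].
  have h1 : proj_le f e.
    apply: Mf => //; exists n.
    case: Ce => [[Pe _] _].
    by rewrite -starX // [in X in _ * X]Pe -HM mulrC Hn.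
  have h2 : proj_le e f.
    apply: Me => //; exists m.
    case: Cf => [[Pf _] _].
    by rewrite -[x]HI -starX // [in X in _ * X]Pf -HM mulrC Hm.
  by rewrite /proj_le in h1 h2; rewrite {1}h2 {2}h1 mulrC.
move=> x y e f [n Hy] [Ce _ Me] [Cf _ Mf].
have [k [g [[Pg Ig] Hg]]] := Hbaer (x ^+ n.+1).
have zg : (x ^+ n.+1) ^+ k.+1 * g = 0.
  have : in_rann_xRn (x ^+ n.+1) k.+1 g by apply/Hg; exists 1; rewrite mulr1.
  by move=> /(_ (fun _ => 1)); rewrite prod_const1.
have yg : y = g * y.
  have : in_rann_xRn (x ^+ n.+1) k.+1 y.
    move=> r; rewrite prod_split exprS -!mulrA [_ * y]mulrC !mulrA.
    rewrite -[x ^+ n.+1 * _]mulrC -(mulrA (x ^+ n.+1 ^+ k)).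
    have := Hy (fun _ => 1); rewrite prod_const1 => ->.
    by rewrite mulr0 mul0r.
  by move/Hg=> [b ->]; rewrite mulrA -Ig.
have Hfg : proj_le f g.
  apply: Mf; first by split => // a; rewrite mulrC.
  by exists 0%N; rewrite expr1 mulrC -yg.
have Heg : proj_le e (1 - g).
  apply: Me.
    split => [|a]; last by rewrite mulrC.
    split; first by rewrite HA (starN Hinv g) (star1 Hinv) -Pg.
    by rewrite mulrBr mulr1 mulrBl mul1r -Ig subrr subr0.
  exists ((n.+1 * k.+1).-1)%N; rewrite prednK ?muln_gt0 //.
  by rewrite exprM mulrBr mulr1 zg subr0.
rewrite /proj_le in Hfg Heg.
have hg : (1 - g) * g = 0 by rewrite mulrBl mul1r -Ig subrr.
by rewrite Hfg Heg -mulrA (mulrCA (1 - g)) hg !mulr0.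
Qed.
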